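(* Let $X$ be a locally compact Hausdorff topological space with a basis of compact open sets, $G$ a discrete group, $\phi=(\phi_g,X_g,X)_{g\in G}$ a partial action of $G$ on $X$ (with $X_g$ open), and $K$ a field. Then $V\mapsto C_K(V)\rtimes_{\phi|_V}G$ is a bijection between the open invariant subsets of $X$ and the graded ideals of $C_K(X)\rtimes_\phi G$.
   Context: A partial action of $G$ (identity $\varepsilon$) on a topological space $X$ is $(\phi_g,X_g,X)_{g\in G}$ with $X_g$ open, homeomorphisms $\phi_g:X_{g^{-1}}\to X_g$, and (i) $X_\varepsilon=X$, $\phi_\varepsilon=\operatorname{id}$; (ii) $\phi_g(X_{g^{-1}}\cap X_h)=X_g\cap X_{gh}$; (iii) $\phi_g\phi_h(x)=\phi_{gh}(x)$ for $x\in X_{h^{-1}}\cap X_{h^{-1}g^{-1}}$. $V\subseteq X$ is invariant if $\phi_{g^{-1}}(X_g\cap V)\subseteq X_{g^{-1}}\cap V$ for all $g$; then $\phi|_V=(\phi_g,V\cap X_g,V)$. $C_K(Y)$ is the algebra of compactly supported locally constant functions $Y\to K$; $C_K(W)$ for open $W$ is the ideal of functions vanishing off $W$; $\phi_g(f)=f\circ\phi_{g^{-1}}$. The partial skew group ring $C_K(X)\rtimes_\phi G$ consists of finite sums $\sum a_g\delta_g$, $a_g\in C_K(X_g)$, with product $(a_g\delta_g)(b_h\delta_h)=\phi_g(\phi_{g^{-1}}(a_g)b_h)\delta_{gh}$, graded by $\deg(a_g\delta_g)=g$; $C_K(V)\rtimes_{\phi|_V}G=\{\sum a_g\delta_g: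 a_g\in C_K(V\cap X_g)\}$ is viewed as a subset of it. An ideal is graded if it is the direct sum of its intersections with the homogeneous components. *)

(* Defs.v *)
From HB Require Import structures.
From mathcomp Require Import all_boot all_algebra.
From Stdlib Require Import ClassicalEpsilon.
From Stdlib Require List.
Set Implicit Arguments. Unset Strict Implicit. Unset Printing Implicit Defensive.
Import GRing.Theory.
Local Open Scope ring_scope.

Record topology (X : Type) := Topology {
  is_open : (X -> Prop) -> Prop;
  open_full : is_open (fun _ => True);
  open_inter : forall U V, is_open U -> is_open V -> is_open (fun x => U x /\ V x);
  open_union : forall (I : Type) (F : I -> X -> Prop),
      (forall i, is_open (F i)) -> is_open (fun x => exists i, F i x) }.

Definition compact (X : Type) (T : topology X) (C : X -> Prop) : Prop :=
  forall (I : Type) (F : I -> X -> Prop),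
    (forall i, is_open T (F i)) -> (forall x, C x -> exists i, F i x) ->
    exists s : seq I, forall x, C x -> exists i, List.In i s /\ F i x.

Definition hausdorff (X : Type) (T : topology X) : Prop :=
  forall x y, x <> y -> exists U V, is_open T U /\ is_open T V /\ U x /\ V y /\
     (forall z, U z -> V z -> False).

Definition locally_compact (X : Type) (T : topology X) : Prop :=
  forall x, exists U C, is_open T U /\ compact T C /\ U x /\ (forall y, U y -> C y).

Definition compact_open_basis (X : Type) (T : topology X) : Prop :=
  forall U x, is_open T U -> U x ->
    exists W, is_open T W /\ compact T W /\ W x /\ (forall y, W y -> U y).

(* f restricted to the open set A is a homeomorphism of A onto the open set B
   (for open A, B: subspace-open = open in X) *)
Definition homeo_between (X : Type) (T : topology X) (A B : X -> Prop) (f : X -> X) : Prop :=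
  [/\ (forall x, A x -> B (f x)),
      (forall x y, A x -> A y -> f x = f y -> x = y),
      (forall y, B y -> exists x, A x /\ f x = y),
      (forall U, is_open T U -> is_open T (fun x => A x /\ U (f x)))
    & (forall U, is_open T U -> is_open T (fun y => exists x, [/\ A x, U x & f x = y]))].

Record group_law (G : Type) := GroupLaw {
  gmul : G -> G -> G;
  ginv : G -> G;
  gunit : G;
  gmulA : forall x y z, gmul x (gmul y z) = gmul (gmul x y) z;
  gmul1 : forall x, gmul gunit x = x;
  gmulx1 : forall x, gmul x gunit = x;
  gmulV : forall x, gmul (ginv x) x = gunit;
  gmulxV : forall x, gmul x (ginv x) = gunit }.

(** * Partial actions  (phi_g, X_g, X)_g ; here X_g = D g, phi_g = phi g
    (phi g is a total function, only its values on D (g^-1) matter) *)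
Definition is_partial_action (X G : Type) (T : topology X) (gr : group_law G)
    (D : G -> X -> Prop) (phi : G -> X -> X) : Prop :=
  [/\ (forall g, is_open T (D g)),
      (forall x, D (gunit gr) x) /\ (forall x, phi (gunit gr) x = x),
      (forall g, homeo_between T (D (ginv gr g)) (D g) (phi g)),
      (forall g h y, (D g y /\ D (gmul gr g h) y) <->
                     exists x, [/\ D (ginv gr g) x, D h x & phi g x = y])
    &
      (forall g h x, D (ginv gr h) x -> D (gmul gr (ginv gr h) (ginv gr g)) x ->
                     phi g (phi h x) = phi (gmul gr g h) x)].

Definition invariant_set (X G : Type) (gr : group_law G) (D : G -> X -> Prop)
    (phi : G -> X -> X) (V : X -> Prop) : Prop :=
  forall g x, D g x -> V x ->
    D (ginv gr g) (phi (ginv gr g) x) /\ V (phi (ginv gr g) x).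

Definition locally_constant (X : Type) (T : topology X) (K : fieldType) (f : X -> K) : Prop :=
  forall x, exists U, is_open T U /\ U x /\ (forall y, U y -> f y = f x).

Definition compactly_supported (X : Type) (T : topology X) (K : fieldType) (f : X -> K) : Prop :=
  exists C, compact T C /\ (forall x, f x <> 0 -> C x).

Definition CK (X : Type) (T : topology X) (K : fieldType) (W : X -> Prop) (f : X -> K) : Prop :=
  [/\ locally_constant T f, compactly_supported T f & (forall x, ~ W x -> f x = 0)].

(** * The partial skew group ring C_K(X) ⋊_phi G.
    An element sum_g a_g δ_g is represented by a : G -> (X -> K) with finite support. *)
Definition fin_supp (G X : Type) (K : fieldType) (a : G -> X -> K) : Prop :=
  exists s : seq G, forall g, ~ List.In g s -> a g = (fun _ => 0).

Definition skew_ring (X G : Type) (T : topology X) (K : fieldType)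
    (D : G -> X -> Prop) (a : G -> X -> K) : Prop :=
  fin_supp a /\ (forall g, CK T (D g) (a g)).

(* C_K(V) ⋊_{phi|V} G viewed as a subset: a_g ∈ C_K(V ∩ X_g) *)
Definition skew_sub (X G : Type) (T : topology X) (K : fieldType)
    (D : G -> X -> Prop) (V : X -> Prop) (a : G -> X -> K) : Prop :=
  fin_supp a /\ (forall g, CK T (fun x => V x /\ D g x) (a g)).

Definition act (X G : Type) (K : fieldType) (gr : group_law G) (D : G -> X -> Prop)
    (phi : G -> X -> X) (g : G) (f : X -> K) : X -> K :=
  fun x => if excluded_middle_informative (D g x) then f (phi (ginv gr g) x) else 0.

Definition supp_list (G X : Type) (K : fieldType) (a : G -> X -> K) : seq G :=
  epsilon (inhabits [::])
    (fun s => List.NoDup s /\ forall g, ~ List.In g s -> a g = (fun _ => 0)).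

(* (a_g δ_g)(b_h δ_h) = phi_g(phi_{g^-1}(a_g) b_h) δ_{gh}, extended bilinearly *)
Definition skew_mul (X G : Type) (K : fieldType) (gr : group_law G) (D : G -> X -> Prop)
    (phi : G -> X -> X) (a b : G -> X -> K) : G -> X -> K :=
  fun k x => \sum_(g <- supp_list a)
     act gr D phi g
       (fun y => act gr D phi (ginv gr g) (a g) y * b (gmul gr (ginv gr g) k) y) x.

Definition is_ideal (X G : Type) (T : topology X) (K : fieldType) (gr : group_law G)
    (D : G -> X -> Prop) (phi : G -> X -> X) (I : (G -> X -> K) -> Prop) : Prop :=
  [/\ (forall a, I a -> skew_ring T D a),
      I (fun _ _ => 0),
      (forall a b, I a -> I b -> I (fun g x => a g x + b g x)),
      (forall a, I a -> I (fun g x => - a g x))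
    & (forall a b, skew_ring T D a -> I b ->
         I (skew_mul gr D phi a b) /\ I (skew_mul gr D phi b a))].

Definition homog (G X : Type) (K : fieldType) (a : G -> X -> K) (g : G) : G -> X -> K :=
  fun h => if excluded_middle_informative (h = g) then a h else (fun _ => 0).

(* I = ⊕_g (I ∩ (C_K(X_g) δ_g)) : every homogeneous component of an element of I lies in I *)
Definition is_graded (G X : Type) (K : fieldType) (I : (G -> X -> K) -> Prop) : Prop :=
  forall a, I a -> forall g, I (homog a g).

(* Main.v *)
Require Import Defs.
From mathcomp Require Import all_boot all_algebra.
From Stdlib Require Import ClassicalEpsilon FunctionalExtensionality PropExtensionality Classical.
From Stdlib Require List.
Set Implicit Arguments. Unset Strict Implicit. Unset Printing Implicit Defensive.
Import GRing.Theory.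
Local Open Scope ring_scope.

Lemma choice_fun (A B : Type) (P : A -> B -> Prop) :
  (forall a, exists b, P a b) -> exists f : A -> B, forall a, P a (f a).
Proof.
move=> H; exists (fun a => proj1_sig (constructive_indefinite_description _ (H a))).
move=> a; exact: (proj2_sig (constructive_indefinite_description _ (H a))).
Qed.

Section Topo.
Variables (X : Type) (T : topology X).

Lemma open_ext (U V : X -> Prop) : is_open T U -> (forall x, U x <-> V x) -> is_open T V.
Proof.
move=> HU HUV; have -> : V = U; last by [].
apply: functional_extensionality => x; apply: propositional_extensionality.
by split => /HUV.
Qed.

Lemma open_local (A : X -> Prop) :
  (forall x, A x -> exists U, [/\ is_open T U, U x & forall y, U y -> A y]) -> is_open T A.
Proof.
move=> H.
have H' : forall i : {x | A x}, exists U, [/\ is_open T U, U (proj1_sig i) & forall y, U y -> A y].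
  by case=> x Ax; exact: H.
have [F HF] := choice_fun H'.
apply: (@open_ext (fun x => exists i, F i x)).
  by apply: open_union => i; have [] := HF i.
move=> x; split.
  by case=> i Fi; have [_ _ ] := HF i; apply.
move=> Ax; exists (exist _ x Ax); by have [] := HF (exist _ x Ax).
Qed.

Lemma open_list_inter (I : Type) (F : I -> X -> Prop) (s : seq I) :
  (forall i, is_open T (F i)) -> is_open T (fun x => forall i, List.In i s -> F i x).
Proof.
move=> HF; elim: s => [|a s IH].
  by apply: (open_ext (open_full T)).
apply: (open_ext (open_inter (HF a) IH)) => x; split.
  by case=> Fa Hs i /= [<-|Hi] //; apply: Hs.
by move=> H; split; [apply: H; left | move=> i Hi; apply: H; right].
Qed.

Lemma compact0 : compact T (fun _ => False).
Proof. by move=> I F _ _; exists [::]. Qed.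

Lemma compactU (A B : X -> Prop) : compact T A -> compact T B -> compact T (fun x => A x \/ B x).
Proof.
move=> cA cB I F HF Hc.
have [s1 H1] := cA I F HF (fun x Ax => Hc x (or_introl Ax)).
have [s2 H2] := cB I F HF (fun x Bx => Hc x (or_intror Bx)).
exists (s1 ++ s2) => x [Ax|Bx].
  by have [i [Hi Fi]] := H1 x Ax; exists i; split => //; apply: List.in_or_app; left.
by have [i [Hi Fi]] := H2 x Bx; exists i; split => //; apply: List.in_or_app; right.
Qed.

Lemma in_pmap (I : Type) (i : I) (s : seq (option I)) :
  List.In (Some i) s -> List.In i (pmap id s).
Proof.
elim: s => [|a s IH] //= [->|H] /=; first by left.
by case: a => [a|] /=; [right|]; apply: IH.
Qed.

Lemma compact_closed_sub (C S : X -> Prop) : compact T C -> (forall x, S x -> C x) ->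
  is_open T (fun x => ~ S x) -> compact T S.
Proof.
move=> cC SC Sc I F HF Hc.
pose F' (o : option I) := if o is Some i then F i else (fun x => ~ S x).
have HF' : forall o, is_open T (F' o) by case.
have Hc' : forall x, C x -> exists o, F' o x.
  move=> x Cx; case: (classic (S x)) => Sx.
    by have [i Fi] := Hc x Sx; exists (Some i).
  by exists None.
have [s Hs] := cC _ F' HF' Hc'.
exists (pmap id s) => x Sx; have [o [Ho Fo]] := Hs x (SC x Sx).
case: o Ho Fo => [i|] Ho Fo /=; last by [].
by exists i; split => //; apply: in_pmap.
Qed.

Hypothesis haus : hausdorff T.

Lemma compact_closed (C : X -> Prop) x : compact T C -> ~ C x ->
  exists U, [/\ is_open T U, U x & forall y, U y -> ~ C y].
Proof.
move=> cC nCx.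
have H : forall i : {y | C y}, exists UV : (X -> Prop) * (X -> Prop),
    [/\ is_open T UV.1, is_open T UV.2, UV.1 x, UV.2 (proj1_sig i) &
       forall z, UV.1 z -> UV.2 z -> False].
  case=> y Cy /=; have xy : x <> y by move=> E; apply: nCx; rewrite E.
  have [U [V [oU [oV [Ux [Vy dUV]]]]]] := haus xy.
  by exists (U, V).
have [f Hf] := choice_fun H.
have [s Hs] := cC _ (fun i => (f i).2) (fun i => let: And5 _ o _ _ _ := Hf i in o)
  (fun y Cy => ex_intro _ (exist _ y Cy) (let: And5 _ _ _ h _ := Hf (exist _ y Cy) in h)).
exists (fun z => forall i, List.In i s -> (f i).1 z); split.
- by apply: open_list_inter => i; have [] := Hf i.
- by move=> i _; have [] := Hf i.
- move=> y Hy Cy; have [i [Hi Fi]] := Hs y Cy.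
  have [_ _ _ _ dis] := Hf i; exact: (dis y (Hy i Hi) Fi).
Qed.

Lemma compact_image (A S : X -> Prop) (f : X -> X) : compact T S -> (forall y, S y -> A y) ->
  (forall U, is_open T U -> is_open T (fun y => A y /\ U (f y))) ->
  compact T (fun x => exists y, S y /\ f y = x).
Proof.
move=> cS SA cont I F HF Hc.
have [s Hs] := cS I (fun i y => A y /\ F i (f y)) (fun i => cont _ (HF i))
  (fun y Sy => let: ex_intro i Fi := Hc (f y) (ex_intro _ y (conj Sy erefl)) in
     ex_intro _ i (conj (SA y Sy) Fi)).
exists s => x [y [Sy <-]]; have [i [Hi [_ Fi]]] := Hs y Sy; by exists i.
Qed.

End Topo.

Section LC.
Variables (X : Type) (T : topology X) (K : fieldType).
Implicit Types (f g : X -> K) (W : X -> Prop).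

Lemma lc_open f (P : K -> Prop) : locally_constant T f -> is_open T (fun y => P (f y)).
Proof.
move=> lf; apply: open_local => x Px; have [U [oU [Ux HU]]] := lf x.
by exists U; split => // y Uy; rewrite HU //.
Qed.

Lemma supp_compact f : locally_constant T f -> compactly_supported T f ->
  compact T (fun y => f y <> 0).
Proof.
move=> lf [C [cC HC]]; apply: (compact_closed_sub cC HC).
exact: lc_open (fun v => ~ v <> 0) lf.
Qed.

Lemma CK_mono W1 W2 f : (forall x, W1 x -> W2 x) -> CK T W1 f -> CK T W2 f.
Proof.
move=> W12 [lf cf vf]; split => // x nW2; apply: vf => W1x; exact: nW2 (W12 _ W1x).
Qed.

Lemma CK0 W : CK T W (fun _ => 0 : K).
Proof.
split => //.
- by move=> x; exists (fun _ => True); split => //; exact: open_full.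
- by exists (fun _ => False); split; [exact: compact0|].
Qed.

Lemma CKD W f g : CK T W f -> CK T W g -> CK T W (fun x => f x + g x).
Proof.
move=> [lf [C1 [c1 H1]] vf] [lg [C2 [c2 H2]] vg]; split.
- move=> x; have [U [oU [Ux HU]]] := lf x; have [V [oV [Vx HV]]] := lg x.
  exists (fun y => U y /\ V y); split; first exact: open_inter; split => //.
  by move=> y [Uy Vy]; rewrite HU // HV //.
- exists (fun x => C1 x \/ C2 x); split; first exact: compactU.
  move=> x nz; case: (classic (f x = 0)) => f0; last by left; apply: H1.
  by right; apply: H2 => g0; apply: nz; rewrite f0 g0 addr0.
- by move=> x nW; rewrite vf // vg // addr0.
Qed.

Lemma CKN W f : CK T W f -> CK T W (fun x => - f x).
Proof.
move=> [lf [C [c H]] vf]; split.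
- move=> x; have [U [oU [Ux HU]]] := lf x.
  by exists U; split => //; split => // y Uy; rewrite HU //.
- by exists C; split => // x nz; apply: H => f0; apply: nz; rewrite f0 oppr0.
- by move=> x nW; rewrite vf // oppr0.
Qed.

Lemma lcM f g : locally_constant T f -> locally_constant T g ->
  locally_constant T (fun x => f x * g x).
Proof.
move=> lf lg x; have [U [oU [Ux HU]]] := lf x; have [V [oV [Vx HV]]] := lg x.
exists (fun y => U y /\ V y); split; first exact: open_inter; split => //.
by move=> y [Uy Vy]; rewrite HU // HV //.
Qed.

Lemma csM f g : compactly_supported T f -> compactly_supported T (fun x => f x * g x).
Proof.
move=> [C [c H]]; exists C; split => // x nz; apply: H => f0; apply: nz; by rewrite f0 mul0r.
Qed.

Lemma CK_sum (I : Type) W (F : I -> X -> K) (s : seq I) :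
  (forall i, List.In i s -> CK T W (F i)) -> CK T W (fun x => \sum_(i <- s) F i x).
Proof.
elim: s => [|a s IH] H.
  have -> : (fun x => \sum_(i <- [::]) F i x) = (fun _ => 0 : K).
    by apply: functional_extensionality => x; rewrite big_nil.
  exact: CK0.
have -> : (fun x => \sum_(i <- a :: s) F i x) = (fun x => F a x + \sum_(i <- s) F i x).
  by apply: functional_extensionality => x; rewrite big_cons.
apply: CKD; first by apply: H; left.
by apply: IH => i Hi; apply: H; right.
Qed.

Definition chi (W : X -> Prop) (r : K) : X -> K :=
  fun x => if excluded_middle_informative (W x) then r else 0.

Hypothesis haus : hausdorff T.

Lemma CK_chi W r : is_open T W -> compact T W -> CK T W (chi W r).
Proof.
move=> oW cW; split.
- move=> x; case: (classic (W x)) => Wx.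
    exists W; split => //; split => // y Wy; rewrite /chi.
    by case: excluded_middle_informative => //; case: excluded_middle_informative.
  have [U [oU Ux HU]] := compact_closed haus cW Wx.
  exists U; split => //; split => // y Uy; rewrite /chi.
  case: excluded_middle_informative => // Wy; first by exfalso; exact: HU y Uy Wy.
  by case: excluded_middle_informative.
- exists W; split => // x; rewrite /chi; by case: excluded_middle_informative.
- by move=> x nW; rewrite /chi; case: excluded_middle_informative.
Qed.

End LC.

Section Grp.
Variables (G : Type) (gr : group_law G).
Local Notation "a * b" := (gmul gr a b).
Local Notation e := (gunit gr).
Local Notation inv := (ginv gr).

Lemma ginvK g : inv (inv g) = g.
Proof.
by rewrite -[inv (inv g)](gmulx1 gr) -(gmulV gr g) gmulA gmulV gmul1.
Qed.

Lemma ginv1 : inv e = e.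
Proof. by rewrite -[inv e](gmul1 gr) gmulxV. Qed.

Lemma gmulKg g h : inv g * (g * h) = h.
Proof. by rewrite gmulA gmulV gmul1. Qed.

Lemma gmulKVg g h : g * (inv g * h) = h.
Proof. by rewrite gmulA gmulxV gmul1. Qed.

End Grp.

Section PA.
Variables (X : Type) (T : topology X) (G : Type) (gr : group_law G)
  (D : G -> X -> Prop) (phi : G -> X -> X) (K : fieldType).
Hypothesis haus : hausdorff T.
Hypothesis PA : is_partial_action T gr D phi.
Local Notation e := (gunit gr).
Local Notation inv := (ginv gr).

Lemma PA_open g : is_open T (D g).
Proof. by case: PA. Qed.

Lemma PA_D1 x : D e x.
Proof. by case: PA => _ [] . Qed.

Lemma PA_phi1 x : phi e x = x.
Proof. by case: PA => _ [] . Qed.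

Lemma PA_maps g x : D (inv g) x -> D g (phi g x).
Proof. by case: PA => _ _ H _ _; case: (H g) => H1 _ _ _ _; apply: H1. Qed.

Lemma PA_cont g U : is_open T U -> is_open T (fun x => D (inv g) x /\ U (phi g x)).
Proof. by case: PA => _ _ H _ _; case: (H g) => _ _ _ H1 _; apply: H1. Qed.

Lemma PA_cancel g x : D g x -> phi g (phi (inv g) x) = x.
Proof.
move=> Dx; case: PA => _ [_ H1] _ _ H.
rewrite (H g (inv g) x); first by rewrite gmulxV H1.
  by rewrite ginvK.
by rewrite ginvK gmulxV; exact: PA_D1.
Qed.

Lemma PA_maps' g x : D g x -> D (inv g) (phi (inv g) x).
Proof. by move=> Dx; apply: PA_maps; rewrite ginvK. Qed.

Lemma PA_cancel' g x : D (inv g) x -> phi (inv g) (phi g x) = x.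
Proof. by move=> Dx; have := PA_cancel Dx; rewrite ginvK. Qed.

Lemma PA_ii g h y : (D g y /\ D (gmul gr g h) y) <->
   exists x, [/\ D (inv g) x, D h x & phi g x = y].
Proof. by case: PA => _ _ _ H _; apply: H. Qed.

Lemma act_ext g (f1 f2 : X -> K) x : (forall y, f1 y = f2 y) ->
  act gr D phi g f1 x = act gr D phi g f2 x.
Proof. by move=> H; rewrite /act; case: excluded_middle_informative => // ?; exact: H. Qed.

Lemma act_zero g (f : X -> K) x : (forall y, f y = 0) -> act gr D phi g f x = 0.
Proof. by move=> H; rewrite /act; case: excluded_middle_informative => // ?; exact: H. Qed.

Lemma act1 (f : X -> K) x : act gr D phi e f x = f x.
Proof.
rewrite /act; case: excluded_middle_informative => [?|]; last by move: (PA_D1 x).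
by rewrite ginv1 PA_phi1.
Qed.

Lemma act_supp g (f : X -> K) x : act gr D phi g f x <> 0 ->
  D g x /\ f (phi (inv g) x) <> 0.
Proof. by rewrite /act; case: excluded_middle_informative. Qed.

Lemma act_lc_cs g (f : X -> K) : locally_constant T f -> compactly_supported T f ->
  (forall y, f y <> 0 -> D (inv g) y) ->
  locally_constant T (act gr D phi g f) /\ compactly_supported T (act gr D phi g f).
Proof.
move=> lf cf fD.
have cS := supp_compact lf cf.
have cS' := compact_image cS fD (@PA_cont g).
have sub : forall x, act gr D phi g f x <> 0 -> exists y, f y <> 0 /\ phi g y = x.
  move=> x /act_supp [Dx nz]; exists (phi (inv g) x); split => //.
  exact: PA_cancel.
split; last by exists (fun x => exists y, f y <> 0 /\ phi g y = x).
move=> x; case: (classic (D g x)) => Dx.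
  have [U [oU [Ux HU]]] := lf (phi (inv g) x).
  exists (fun z => D (inv (inv g)) z /\ U (phi (inv g) z)); split.
    exact: PA_cont.
  split; first by rewrite ginvK.
  move=> z [Dz Uz]; rewrite ginvK in Dz.
  rewrite /act; case: excluded_middle_informative => // ?.
  case: excluded_middle_informative => // ?; exact: HU.
have nS : ~ (exists y, f y <> 0 /\ phi g y = x).
  by case=> y [nz E]; apply: Dx; rewrite -E; apply: PA_maps; apply: fD.
have [U [oU Ux HU]] := compact_closed haus cS' nS.
exists U; split => //; split => // z Uz.
have -> : act gr D phi g f x = 0 by rewrite /act; case: excluded_middle_informative.
by apply: NNPP => nz; apply: (HU z Uz); apply: sub.
Qed.

End PA.

Lemma sum_zero (K : fieldType) (I : Type) (F : I -> K) (s : seq I) :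
  (forall i, List.In i s -> F i = 0) -> \sum_(i <- s) F i = 0.
Proof.
elim: s => [|a s IH] H; first by rewrite big_nil.
by rewrite big_cons H /=; [rewrite add0r; apply: IH => i Hi; apply: H; right | left].
Qed.

Lemma sum_single (K : fieldType) (I : Type) (F : I -> K) (s : seq I) g :
  List.NoDup s -> (forall i, i <> g -> F i = 0) -> (~ List.In g s -> F g = 0) ->
  \sum_(i <- s) F i = F g.
Proof.
elim: s => [|a s IH] nd H Hg; first by rewrite big_nil Hg.
rewrite big_cons; move/List.NoDup_cons_iff: nd => [nas nds].
case: (classic (a = g)) => [E|ne].
  subst a; rewrite sum_zero ?addr0 // => i Hi; apply: H => E; subst i; exact: nas Hi.
rewrite H // add0r IH // => ngs; apply: Hg; case=> [E|Hin]; [exact: ne E | exact: ngs Hin].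
Qed.

Lemma supp_list_spec (G X : Type) (K : fieldType) (a : G -> X -> K) : fin_supp a ->
  List.NoDup (supp_list a) /\ forall g, ~ List.In g (supp_list a) -> a g = (fun _ => 0).
Proof.
move=> [s Hs]; rewrite /supp_list.
apply: (@epsilon_spec _ (inhabits [::]) (fun s => List.NoDup s /\ forall g, ~ List.In g s -> a g = (fun _ => 0))).
pose dec := fun x y : G => excluded_middle_informative (x = y).
exists (List.nodup dec s); split; first exact: List.NoDup_nodup.
move=> g Hg; apply: Hs => Hin; apply: Hg; exact: (proj2 (List.nodup_In dec s g) Hin).
Qed.

Section Skew.
Variables (X : Type) (T : topology X) (G : Type) (gr : group_law G)
  (D : G -> X -> Prop) (phi : G -> X -> X) (K : fieldType).
Hypothesis haus : hausdorff T.
Hypothesis PA : is_partial_action T gr D phi.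
Local Notation e := (gunit gr).
Local Notation inv := (ginv gr).

Definition term (a b : G -> X -> K) g k x :=
  act gr D phi g (fun y => act gr D phi (inv g) (a g) y * b (gmul gr (inv g) k) y) x.

Lemma skew_mulE a b k x : skew_mul gr D phi a b k x = \sum_(g <- supp_list a) term a b g k x.
Proof. by []. Qed.

Lemma CK_vanish (W : X -> Prop) (f : X -> K) x : CK T W f -> f x <> 0 -> W x.
Proof. by case=> _ _ H nz; apply: NNPP => nW; apply: nz; apply: H. Qed.

Lemma term_CK V1 V2 (a b : G -> X -> K) g k :
  invariant_set gr D phi V1 -> invariant_set gr D phi V2 ->
  CK T (fun x => V1 x /\ D g x) (a g) ->
  CK T (fun x => V2 x /\ D (gmul gr (inv g) k) x) (b (gmul gr (inv g) k)) ->
  CK T (fun x => (V1 x /\ V2 x) /\ D k x) (term a b g k).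
Proof.
move=> I1 I2 ca cb.
set h := gmul gr (inv g) k in cb *.
have [la csa _] := ca; have [lb csb _] := cb.
have [lf1 cf1] : locally_constant T (act gr D phi (inv g) (a g)) /\
                 compactly_supported T (act gr D phi (inv g) (a g)).
  apply: (act_lc_cs haus PA) => // y nz; rewrite ginvK.
  by have [] := CK_vanish ca nz.
have f1s : forall y, act gr D phi (inv g) (a g) y <> 0 -> D (inv g) y /\ V1 y.
  move=> y nz0; have [Dy nz] := act_supp nz0; rewrite ginvK in nz; split => //.
  have [V1z Dz] := CK_vanish ca nz.
  have [_ ] := I1 g _ Dz V1z; by rewrite (PA_cancel' PA Dy).
set f2 := fun y => act gr D phi (inv g) (a g) y * b h y.
have f2s : forall y, f2 y <> 0 -> [/\ D (inv g) y, V1 y, V2 y & D h y].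
  move=> y nz.
  have nz1 : act gr D phi (inv g) (a g) y <> 0 by move=> E; apply: nz; rewrite /f2 E mul0r.
  have nz2 : b h y <> 0 by move=> E; apply: nz; rewrite /f2 E mulr0.
  have [D1 V1y] := f1s y nz1; have [V2y Dhy] := CK_vanish cb nz2; by split.
have [lt ct] : locally_constant T (act gr D phi g f2) /\ compactly_supported T (act gr D phi g f2).
  apply: (act_lc_cs haus PA).
  - exact: lcM.
  - exact: csM.
  - by move=> y /f2s [].
split => // x nW; apply: NNPP => nz; apply: nW.
have [Dx nz2] := act_supp nz.
have [D1 V1y V2y Dhy] := f2s _ nz2.
have Ex := PA_cancel PA Dx.
set y := phi (inv g) x in D1 V1y V2y Dhy Ex.
have [_ V1x] := I1 (inv g) y D1 V1y; have [_ V2x] := I2 (inv g) y D1 V2y.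
rewrite ginvK Ex in V1x V2x.
split => //.
have [_ ] := (proj2 (PA_ii PA g h x)) (ex_intro _ y (And3 D1 Dhy Ex)).
by rewrite /h gmulKVg.
Qed.

Lemma skew_mul_sub V1 V2 (a b : G -> X -> K) :
  invariant_set gr D phi V1 -> invariant_set gr D phi V2 ->
  skew_sub T D V1 a -> skew_sub T D V2 b ->
  skew_sub T D (fun x => V1 x /\ V2 x) (skew_mul gr D phi a b).
Proof.
move=> I1 I2 [fa ca] [[sb Hsb] cb].
have [nda Ha] := supp_list_spec fa.
split.
  exists (List.flat_map (fun g => List.map (fun h => gmul gr g h) sb) (supp_list a)).
  move=> k Hk; apply: functional_extensionality => x; rewrite skew_mulE.
  apply: sum_zero => g Hg; apply: act_zero => y.
  rewrite Hsb ?mulr0 // => Hin; apply: Hk.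
  apply/List.in_flat_map; exists g; split => //.
  apply/List.in_map_iff; exists (gmul gr (inv g) k); split => //.
  by rewrite gmulKVg.
move=> k.
have := @CK_sum _ T K _ (fun x => (V1 x /\ V2 x) /\ D k x) (fun g => term a b g k) (supp_list a).
apply => g _; exact: term_CK.
Qed.

End Skew.

Section Main.
Variables (X : Type) (T : topology X) (G : Type) (gr : group_law G)
  (D : G -> X -> Prop) (phi : G -> X -> X) (K : fieldType).
Hypothesis haus : hausdorff T.
Hypothesis basis : compact_open_basis T.
Hypothesis PA : is_partial_action T gr D phi.
Local Notation e := (gunit gr).
Local Notation inv := (ginv gr).

Definition single (g : G) (f : X -> K) : G -> X -> K :=
  fun h => if excluded_middle_informative (h = g) then f else (fun _ => 0).

Lemma single_eq g f : single g f g = f.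
Proof. by rewrite /single; case: excluded_middle_informative. Qed.

Lemma single_ne g f h : h <> g -> single g f h = (fun _ => 0).
Proof. by move=> ne; rewrite /single; case: excluded_middle_informative. Qed.

Lemma fin_supp_single g f : fin_supp (single g f).
Proof. by exists [:: g] => h Hh; apply: single_ne => E; apply: Hh; left. Qed.

Lemma skew_sub_single V g f : CK T (fun x => V x /\ D g x) f -> skew_sub T D V (single g f).
Proof.
move=> cf; split; first exact: fin_supp_single.
move=> h; case: (classic (h = g)) => [->|ne]; first by rewrite single_eq.
rewrite single_ne //; exact: CK0.
Qed.

Lemma sub_ring V (a : G -> X -> K) : skew_sub T D V a -> skew_ring T D a.
Proof. by case=> fa ca; split => // g; apply: CK_mono (ca g) => x []. Qed.

Lemma ring_sub (a : G -> X -> K) : skew_ring T D a -> skew_sub T D (fun _ => True) a.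
Proof. by case=> fa ca; split => // g; apply: CK_mono (ca g) => x. Qed.

Lemma homog_single (a : G -> X -> K) g : homog a g = single g (a g).
Proof.
apply: functional_extensionality => h; rewrite /homog /single.
by case: excluded_middle_informative => // E; subst h.
Qed.

Lemma homog_sub V (a : G -> X -> K) g : skew_sub T D V a -> skew_sub T D V (homog a g).
Proof. by move=> [fa ca]; rewrite homog_single; apply: skew_sub_single. Qed.

Lemma term_zero (a b : G -> X -> K) g k x : a g = (fun _ => 0) -> term gr D phi a b g k x = 0.
Proof.
move=> a0; apply: act_zero => y; rewrite a0 act_zero ?mul0r //.
Qed.

Lemma mul_single_l g f (b : G -> X -> K) k x :
  skew_mul gr D phi (single g f) b k x =
  act gr D phi g (fun y => act gr D phi (inv g) f y * b (gmul gr (inv g) k) y) x.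
Proof.
rewrite skew_mulE; have [nd Hs] := supp_list_spec (fin_supp_single g f).
rewrite (@sum_single _ _ _ _ g) //.
- by rewrite /term single_eq.
- by move=> i ne; apply: term_zero; rewrite single_ne.
- by move=> ng; apply: term_zero; apply: Hs.
Qed.

Lemma mul_single_e f (b : G -> X -> K) k x :
  skew_mul gr D phi (single e f) b k x = f x * b k x.
Proof.
rewrite mul_single_l (act1 PA) ginv1 gmul1 (act1 PA) //.
Qed.

Lemma inv_True : invariant_set gr D phi (fun _ => True).
Proof. by move=> g x Dx _; split => //; apply: (PA_maps' PA). Qed.

Lemma part1 V : invariant_set gr D phi V ->
  is_ideal T gr D phi (fun a : G -> X -> K => skew_sub T D V a) /\
  is_graded (fun a : G -> X -> K => skew_sub T D V a).
Proof.
move=> IV; split; last by move=> a Ha g; apply: homog_sub.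
split.
- exact: sub_ring.
- split; first by exists [::].
  move=> g; exact: CK0.
- move=> a b [[sa Ha] ca] [[sb Hb] cb]; split.
    exists (sa ++ sb) => g Hg; apply: functional_extensionality => x.
    rewrite Ha; last by move=> H; apply: Hg; apply: List.in_or_app; left.
    rewrite Hb; last by move=> H; apply: Hg; apply: List.in_or_app; right.
    by rewrite addr0.
  move=> g; exact: CKD.
- move=> a [[sa Ha] ca]; split.
    exists sa => g Hg; apply: functional_extensionality => x.
    by rewrite Ha // oppr0.
  move=> g; exact: CKN.
- move=> a b Ha Hb; split.
    have := skew_mul_sub haus PA inv_True IV (ring_sub Ha) Hb.
    by case=> f c; split => // g; apply: CK_mono (c g) => x [[]].
  have := skew_mul_sub haus PA IV inv_True Hb (ring_sub Ha).
  by case=> f c; split => // g; apply: CK_mono (c g) => x [[]].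
Qed.

Lemma chi_open_compact W (r : K) : is_open T W -> compact T W ->
  skew_ring T D (single e (chi W r)).
Proof.
move=> oW cW; apply: (@sub_ring (fun _ => True)); apply: skew_sub_single.
apply: CK_mono (CK_chi haus r oW cW) => x _; split => //; exact: PA_D1 PA x.
Qed.

Lemma part2 V1 V2 : is_open T V1 ->
  (forall a : G -> X -> K, skew_sub T D V1 a <-> skew_sub T D V2 a) ->
  forall x, V1 x -> V2 x.
Proof.
move=> oV1 H x V1x.
have [W [oW [cW [Wx WV]]]] := basis oV1 V1x.
have s1 : skew_sub T D V1 (single e (chi W (1 : K))).
  apply: skew_sub_single; apply: CK_mono (CK_chi haus (1 : K) oW cW) => y Wy.
  split; [exact: WV | exact: PA_D1 PA y].
have [_ c2] := proj1 (H _) s1.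
have := CK_vanish (c2 e) (x := x); rewrite single_eq /chi.
case: excluded_middle_informative => // ? H1.
by have [] := H1 (fun E => (negP (oner_neq0 K)) (introT eqP E)).
Qed.

Lemma act_in g (f : X -> K) x : D g x -> act gr D phi g f x = f (phi (inv g) x).
Proof. by rewrite /act; case: excluded_middle_informative. Qed.

Lemma chi_in (W : X -> Prop) (r : K) x : W x -> chi W r x = r.
Proof. by rewrite /chi; case: excluded_middle_informative. Qed.

Lemma chi_ext (A B : X -> Prop) (r : K) : (forall x, A x <-> B x) -> chi A r = chi B r.
Proof.
move=> H; have -> // : A = B.
by apply: functional_extensionality => x; apply: propositional_extensionality.
Qed.

Lemma one_neq0 : (1 : K) <> 0.
Proof. by move=> E; move: (oner_neq0 K); rewrite E eqxx. Qed.

Section Surj.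
Variable Id : (G -> X -> K) -> Prop.
Hypothesis HI : is_ideal T gr D phi Id.
Hypothesis Hgr : is_graded Id.

Definition Vset := fun x => exists a, Id a /\ a e x <> 0.

Lemma Vopen : is_open T Vset.
Proof.
have [Hr _ _ _ _] := HI.
apply: open_local => x [a [Ia nz]].
have [_ ca] := Hr a Ia; have [lf _ _] := ca e.
have [U [oU [Ux HU]]] := lf x.
exists U; split => // y Uy; exists a; split => //; rewrite HU //.
Qed.

Lemma ring_chi g (W : X -> Prop) (r : K) : is_open T W -> compact T W ->
  (forall y, W y -> D g y) -> skew_ring T D (single g (chi W r)).
Proof.
move=> oW cW WD; apply: (@sub_ring (fun _ => True)); apply: skew_sub_single.
by apply: CK_mono (CK_chi haus r oW cW) => y Wy; split => //; apply: WD.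
Qed.

Lemma L1 a g x : Id a -> a g x <> 0 -> Vset x.
Proof.
have [Hr _ _ _ Hmul] := HI.
move=> Ia nz; have Ih := Hgr Ia g; rewrite homog_single in Ih.
have [_ ca] := Hr a Ia; have Dx := CK_vanish (ca g) nz.
have Dy := PA_maps' PA Dx.
have [W [oW [cW [Wy WD]]]] := basis (PA_open PA (inv g)) Dy.
have rc := ring_chi (1 : K) oW cW WD.
have Ip := (Hmul _ _ rc Ih).2.
exists (skew_mul gr D phi (single g (a g)) (single (inv g) (chi W 1))); split => //.
rewrite mul_single_l gmulx1 single_eq act_in // act_in // chi_in // mulr1.
by rewrite ginvK (PA_cancel PA).
Qed.

Lemma Vinv : invariant_set gr D phi Vset.
Proof.
have [Hr _ _ _ Hmul] := HI.
move=> g x Dx [b [Ib nz]].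
have Dy := PA_maps' PA Dx; split => //.
have [W [oW [cW [Wy WD]]]] := basis (PA_open PA (inv g)) Dy.
have rc := ring_chi (1 : K) oW cW WD.
have Ip := (Hmul _ _ rc Ib).1.
apply: (L1 (g := inv g) Ip).
rewrite mul_single_l act_in // ginvK gmulxV (PA_cancel PA) // act_in // chi_in // mul1r //.
Qed.

Lemma Isub a : Id a -> skew_sub T D Vset a.
Proof.
have [Hr _ _ _ _] := HI.
move=> Ia; have [fa ca] := Hr a Ia; split => // g.
have [lf cf vf] := ca g; split => // x nV; apply: NNPP => nz; apply: nV.
split; [exact: L1 Ia nz | exact: (CK_vanish (ca g) nz)].
Qed.

Lemma StepA x : Vset x -> exists W, [/\ is_open T W, compact T W, W x & Id (single e (chi W 1))].
Proof.
have [Hr _ _ _ Hmul] := HI.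
move=> [b [Ib nz]]; have Ih := Hgr Ib e; rewrite homog_single in Ih.
have [_ cb] := Hr b Ib; have [lf _ _] := cb e.
have [U [oU [Ux HU]]] := lf x.
have [W [oW [cW [Wx WU]]]] := basis oU Ux.
have rc := ring_chi (b e x)^-1 oW cW (fun y _ => PA_D1 PA y).
have Ip := (Hmul _ _ rc Ih).1.
exists W; split => //.
suff <- : skew_mul gr D phi (single e (chi W (b e x)^-1)) (single e (b e)) = single e (chi W 1) by [].
apply: functional_extensionality => k; apply: functional_extensionality => z.
rewrite mul_single_e; case: (classic (k = e)) => [->|ne].
  rewrite !single_eq /chi; case: excluded_middle_informative => Wz; last by rewrite mul0r.
  rewrite HU; [by rewrite mulVf //; apply/eqP | exact: WU].
by rewrite !single_ne // mulr0.
Qed.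

Lemma Pempty : Id (single e (chi (fun _ => False) 1)).
Proof.
have [_ H0 _ _ _] := HI.
suff -> : single e (chi (fun _ => False) (1 : K)) = (fun _ _ => 0) by [].
apply: functional_extensionality => k; apply: functional_extensionality => z.
rewrite /single /chi; case: excluded_middle_informative => //.
by case: excluded_middle_informative.
Qed.

Lemma Punion A B : Id (single e (chi A 1)) -> Id (single e (chi B 1)) ->
  Id (single e (chi (fun x => A x \/ B x) 1)).
Proof.
have [Hr _ Hadd Hneg Hmul] := HI.
move=> Ia Ib; have Iab := (Hmul _ _ (Hr _ Ia) Ib).1.
have := Hadd _ _ (Hadd _ _ Ia Ib) (Hneg _ Iab).
set F := (fun g x => _); suff -> : single e (chi (fun x => A x \/ B x) 1) = F by [].
rewrite /F; apply: functional_extensionality => k; apply: functional_extensionality => z.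
rewrite mul_single_e; case: (classic (k = e)) => [->|ne].
  rewrite !single_eq /chi.
  case: (excluded_middle_informative (A z)) => Az;
  case: (excluded_middle_informative (B z)) => Bz;
  case: excluded_middle_informative => ABz;
  rewrite /= ?mulr1 ?mulr0 ?mul0r ?oppr0 ?addr0 ?add0r ?addrK ?addr0 //;
  first [by case: ABz | by exfalso; apply: ABz; left | by exfalso; apply: ABz; right].
by rewrite !single_ne //= mulr0 oppr0 !addr0.
Qed.

Lemma Plist (J : Type) (W : J -> X -> Prop) (s : seq J) :
  (forall i, List.In i s -> Id (single e (chi (W i) 1))) ->
  Id (single e (chi (fun x => exists i, List.In i s /\ W i x) 1)).
Proof.
elim: s => [|a s IH] H.
  rewrite (@chi_ext _ (fun _ => False)); first exact: Pempty.
  by move=> x; split => // [[i [[] _]]].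
rewrite (@chi_ext _ (fun x => W a x \/ exists i, List.In i s /\ W i x)).
  apply: Punion; first by apply: H; left.
  by apply: IH => i Hi; apply: H; right.
move=> x; split.
  by case=> i [[<-|Hi] Wi]; [left | right; exists i].
by case=> [Wa|[i [Hi Wi]]]; [exists a; split => //; left | exists i; split => //; right].
Qed.

Lemma StepC a g : skew_sub T D Vset a -> Id (homog a g).
Proof.
have [Hr _ _ _ Hmul] := HI.
move=> Ha; have [fa ca] := Ha; have [lf cf vf] := ca g.
have cS := supp_compact lf cf.
have H : forall i : {x | a g x <> 0}, exists W,
    [/\ is_open T W, compact T W, W (proj1_sig i) & Id (single e (chi W 1))].
  case=> x nz /=; apply: StepA; exact: (proj1 (CK_vanish (ca g) nz)).
have [Wf HW] := choice_fun H.
have [s Hs] := cS _ Wf (fun i => let: And4 o _ _ _ := HW i in o)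
  (fun x nz => ex_intro _ (exist _ x nz) (let: And4 _ _ w _ := HW (exist _ x nz) in w)).
have IU := @Plist _ Wf s (fun i _ => let: And4 _ _ _ p := HW i in p).
have Ip := (Hmul _ _ (sub_ring (homog_sub g Ha)) IU).2.
suff <- : skew_mul gr D phi (single e (chi (fun x => exists i, List.In i s /\ Wf i x) 1))
    (homog a g) = homog a g by [].
apply: functional_extensionality => k; apply: functional_extensionality => z.
rewrite mul_single_e; case: (classic (homog a g k z = 0)) => [->|nz]; first by rewrite mulr0.
rewrite chi_in ?mul1r //.
move: nz; rewrite /homog; case: excluded_middle_informative => // E nz.
subst k; exact: Hs z nz.
Qed.

Lemma I_sum (F : G -> G -> X -> K) (s : seq G) :
  (forall g, List.In g s -> Id (F g)) -> Id (fun h x => \sum_(g <- s) F g h x).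
Proof.
have [_ H0 Hadd _ _] := HI.
elim: s => [|a s IH] H.
  suff -> : (fun h x => \sum_(g <- [::]) F g h x) = (fun _ _ => 0) by [].
  apply: functional_extensionality => k; apply: functional_extensionality => z.
  by rewrite big_nil.
have := Hadd _ _ (H a (or_introl erefl)) (IH (fun g Hg => H g (or_intror Hg))).
set F' := (fun g x => _); suff -> : (fun h x => \sum_(g <- a :: s) F g h x) = F' by [].
apply: functional_extensionality => k; apply: functional_extensionality => z.
by rewrite /F' big_cons.
Qed.

Lemma StepD a : skew_sub T D Vset a -> Id a.
Proof.
move=> Ha; have [fa _] := Ha; have [nd Hs] := supp_list_spec fa.
have := I_sum (F := fun g => homog a g) (s := supp_list a) (fun g _ => StepC g Ha).
suff -> : (fun h x => \sum_(g <- supp_list a) homog a g h x) = a by [].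
apply: functional_extensionality => k; apply: functional_extensionality => z.
rewrite (@sum_single _ _ _ _ k) //.
- by rewrite /homog; case: excluded_middle_informative.
- move=> i ne; rewrite /homog; case: excluded_middle_informative => // E.
  by exfalso; apply: ne; rewrite E.
- by move=> nk; rewrite /homog; case: excluded_middle_informative => // ?; rewrite Hs.
Qed.

End Surj.
End Main.

Theorem mainTheorem10 (X : Type) (T : topology X) (G : Type) (gr : group_law G)
    (D : G -> X -> Prop) (phi : G -> X -> X) (K : fieldType) :
  locally_compact T -> hausdorff T -> compact_open_basis T ->
  is_partial_action T gr D phi ->
  [/\ (* V |-> C_K(V) ⋊ G sends open invariant_set sets to graded ideals *)
      (forall V : X -> Prop, is_open T V -> invariant_set gr D phi V ->
         is_ideal T gr D phi (fun a : G -> X -> K => skew_sub T D V a) /\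
         is_graded (fun a : G -> X -> K => skew_sub T D V a)),
      (* injectivity *)
      (forall V1 V2 : X -> Prop,
         is_open T V1 -> invariant_set gr D phi V1 ->
         is_open T V2 -> invariant_set gr D phi V2 ->
         (forall a : G -> X -> K, skew_sub T D V1 a <-> skew_sub T D V2 a) ->
         forall x, V1 x <-> V2 x)
    & (* surjectivity *)
      (forall I : (G -> X -> K) -> Prop, is_ideal T gr D phi I -> is_graded I ->
         exists V : X -> Prop, [/\ is_open T V, invariant_set gr D phi V &
           forall a, I a <-> skew_sub T D V a])].
Proof.
move=> _ haus basis PA; split.
- by move=> V _ IV; apply: (@part1 _ _ _ _ _ _ K haus PA V IV).
- move=> V1 V2 o1 _ o2 _ H x; split.
    exact: (@part2 _ _ _ _ _ _ K haus basis PA V1 V2 o1 H).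
  apply: (@part2 _ _ _ _ _ _ K haus basis PA V2 V1 o2) => a; split => /H //.
- move=> I HI Hg; exists (Vset gr I); split.
  + exact: (Vopen HI).
  + exact: (Vinv haus basis PA HI Hg).
  + move=> a; split; first exact: (Isub haus basis PA HI Hg).
    exact: (StepD haus basis PA HI Hg).
Qed.
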